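(* Let $V$ be an $n$-dimensional left vector space over a division ring $R$ ($4\le n<\infty$), and let $n,k,l,m$ satisfy $l\ge 4$, $1<k<n-1$, $1<m<l-1$ and $\min\{m,l-m\}\le\min\{k,n-k\}$. Let $\mathcal J$ be the image of an isometric embedding of the Johnson graph $J(l,m)$ in the Grassmann graph $\Gamma_k(V)$, and let $\Gamma(\mathcal J)$ be the restriction (induced subgraph) of $\Gamma_k(V)$ to $\mathcal J$. Then every maximal clique of $\Gamma(\mathcal J)$ is contained in precisely one maximal clique of $\Gamma_k(V)$.
   Context: $\mathcal G_k(V)$ is the set of $k$-dimensional subspaces of $V$. The Grassmann graph $\Gamma_k(V)$ has vertex set $\mathcal G_k(V)$, two vertices being adjacent if their intersection is $(k-1)$-dimensional. The Johnson graph $J(l,m)$ has as vertices the $m$-element subsets of an $l$-element set, two being adjacent if they meet in $m-1$ elements. An isometric embedding is an injective map of vertex sets preserving graph distance. *)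

(* Defs.v *)
From mathcomp Require Import all_boot all_order all_algebra.
Set Implicit Arguments. Unset Strict Implicit. Unset Printing Implicit Defensive.
Import GRing.Theory.
Local Open Scope ring_scope.

Definition division_ring (R : unitRingType) : Prop :=
  forall x : R, x != 0 -> x \is a GRing.unit.

(** The n-dimensional left vector space R^n (row vectors, left scalar action a *: v). *)
Notation vecsp R n := 'rV[R]_n.

Definition lin_free (R : unitRingType) (n d : nat) (b : 'I_d -> vecsp R n) : Prop :=
  forall c : 'I_d -> R, \sum_(i < d) c i *: b i = 0 -> forall i, c i = 0.

Definition is_subspace_dim (R : unitRingType) (n d : nat) (X : vecsp R n -> Prop) : Prop :=
  exists b : 'I_d -> vecsp R n, lin_free b /\
    forall v, X v <-> exists c : 'I_d -> R, v = \sum_(i < d) c i *: b i.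

Definition grass_vertex (R : unitRingType) (n k : nat) (X : vecsp R n -> Prop) : Prop :=
  is_subspace_dim k X.

Definition grass_adj (R : unitRingType) (n k : nat) (X Y : vecsp R n -> Prop) : Prop :=
  grass_vertex k X /\ grass_vertex k Y /\
  is_subspace_dim k.-1 (fun v => X v /\ Y v).

Definition johnson_vertex (l m : nat) (A : {set 'I_l}) : Prop := #|A| = m.
Definition johnson_adj (l m : nat) (A B : {set 'I_l}) : Prop :=
  johnson_vertex m A /\ johnson_vertex m B /\ #|A :&: B| = m.-1.

Fixpoint walk (T : Type) (adj : T -> T -> Prop) (d : nat) (x y : T) : Prop :=
  match d with
  | 0 => x = y
  | d'.+1 => exists z, adj x z /\ walk adj d' z y
  end.

Definition gdist (T : Type) (adj : T -> T -> Prop) (x y : T) (d : nat) : Prop :=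
  walk adj d x y /\ forall d', walk adj d' x y -> (d <= d')%N.

Definition isometric_embedding (R : unitRingType) (n k l m : nat)
    (f : {set 'I_l} -> (vecsp R n -> Prop)) : Prop :=
  (forall A, johnson_vertex m A -> grass_vertex k (f A)) /\
  (forall A B, johnson_vertex m A -> johnson_vertex m B -> f A = f B -> A = B) /\
  (forall A B d, johnson_vertex m A -> johnson_vertex m B ->
     (gdist (@johnson_adj l m) A B d <-> gdist (@grass_adj R n k) (f A) (f B) d)).

Definition is_clique (T : Type) (P : T -> Prop) (adj : T -> T -> Prop) (C : T -> Prop) : Prop :=
  (forall x, C x -> P x) /\ (forall x y, C x -> C y -> x <> y -> adj x y).

Definition is_maximal_clique (T : Type) (P : T -> Prop) (adj : T -> T -> Prop)
    (C : T -> Prop) : Prop :=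
  is_clique P adj C /\
  forall D, is_clique P adj D -> (forall x, C x -> D x) -> forall x, D x -> C x.

(* Main.v *)
Require Import Defs.
From mathcomp Require Import all_boot all_order all_algebra zify.
From Stdlib Require Import Classical FunctionalExtensionality PropExtensionality.
Set Implicit Arguments. Unset Strict Implicit. Unset Printing Implicit Defensive.
Import GRing.Theory.
Local Open Scope ring_scope.

Definition subs {T : Type} (X Y : T -> Prop) := forall v, X v -> Y v.

Definition addl {R : unitRingType} {n : nat} (X : 'rV[R]_n -> Prop) (v : 'rV[R]_n) :=
  fun w => exists y c, X y /\ w = y + c *: v.

Fixpoint sp {R : unitRingType} {n : nat} (d : nat) (X : 'rV[R]_n -> Prop) : Prop :=
  match d with
  | 0 => forall v, X v <-> v = 0
  | d'.+1 => exists Y v, sp d' Y /\ ~ Y v /\ forall w, X w <-> addl Y v w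
  end.

Definition subsp {R : unitRingType} {n : nat} (X : 'rV[R]_n -> Prop) :=
  X 0 /\ (forall u v, X u -> X v -> X (u + v)) /\ (forall c u, X u -> X (c *: u)).

Lemma sp_subsp (R : unitRingType) (n : nat) d (X : 'rV[R]_n -> Prop) : sp d X -> subsp X.
Proof.
elim: d X => [|d IH] X /=.
  move=> H; split; first by apply/H.
  split; first by move=> u v /H -> /H ->; apply/H; rewrite addr0.
  by move=> c u /H ->; apply/H; rewrite scaler0.
move=> [Y [v [HY [Hv HX]]]].
have [Y0 [YD YZ]] := IH _ HY.
split; first by apply/HX; exists 0, 0; rewrite scale0r addr0.
split.
  move=> u w /HX [y1 [c1 [Hy1 ->]]] /HX [y2 [c2 [Hy2 ->]]]; apply/HX.
  exists (y1 + y2), (c1 + c2); split; first by apply: YD.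
  by rewrite scalerDl !addrA [y1 + _ + y2]addrC !addrA [y2 + y1]addrC.
move=> c u /HX [y [c1 [Hy ->]]]; apply/HX.
exists (c *: y), (c * c1); split; first by apply: YZ.
by rewrite scalerDr scalerA.
Qed.

Lemma sp_ext (R : unitRingType) (n : nat) d (X X' : 'rV[R]_n -> Prop) :
  sp d X -> (forall v, X v <-> X' v) -> sp d X'.
Proof.
case: d => [|d] /=.
  by move=> H E v; rewrite -E.
move=> [Y [v [HY [Hv HX]]]] E; exists Y, v; split=> //; split=> // w.
by rewrite -E.
Qed.

Lemma sp_add (R : unitRingType) (n : nat) d (X : 'rV[R]_n -> Prop) v :
  sp d X -> ~ X v -> sp d.+1 (addl X v).
Proof. by move=> H Hv /=; exists X, v. Qed.

Lemma addl_sub (R : unitRingType) (n : nat) (X Y : 'rV[R]_n -> Prop) v :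
  subsp Y -> subs X Y -> Y v -> subs (addl X v) Y.
Proof.
move=> [Y0 [YD YZ]] XY Yv w [y [c [Hy ->]]].
by apply: YD; [apply: XY | apply: YZ].
Qed.

Lemma sub_addl (R : unitRingType) (n : nat) (X : 'rV[R]_n -> Prop) v :
  subs X (addl X v).
Proof. by move=> w Hw; exists w, 0; rewrite scale0r addr0. Qed.

Lemma addl_v (R : unitRingType) (n : nat) (X : 'rV[R]_n -> Prop) v :
  subsp X -> addl X v v.
Proof. by move=> [X0 _]; exists 0, 1; rewrite scale1r add0r. Qed.
Lemma K_lemma (R : unitRingType) (n : nat) (hR : division_ring R) (X' : 'rV[R]_n -> Prop) x :
  subsp X' -> forall p Y, sp p.+1 Y -> subs Y (addl X' x) ->
  exists Z, sp p Z /\ subs Z X' /\ subs Z Y.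
Proof.
move=> HX' p; elim: p => [|p IH] Y HY HYX.
  have [Y0 _] := sp_subsp HY.
  exists (fun v => v = 0); split=> //; split=> v ->; [by case: HX'|done].
have HYs := sp_subsp HY.
move: HY => [Y' [u [HY' [Hu EY]]]].
have HY's : sp p.+1 Y' := HY'.
have Y'Y : subs Y' Y by move=> w Hw; apply/EY; apply: sub_addl.
have [Z' [HZ' [Z'X Z'Y]]] := IH Y' HY's (fun w Hw => HYX w (Y'Y w Hw)).
case: (classic (exists y', Y' y' /\ ~ X' y')) => [[y' [Hy' Ny']]|Hno]; last first.
  exists Y'; split=> //; split=> // w Hw.
  by apply: NNPP => Hn; apply: Hno; exists w.
have [a [c [Ha Ey']]] := HYX y' (Y'Y y' Hy').
have Yu : Y u by apply/EY; apply: addl_v; apply: sp_subsp HY's.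
have [b [d [Hb Eu]]] := HYX u Yu.
have c0 : c != 0.
  apply/negP => /eqP c0; apply: Ny'; by rewrite Ey' c0 scale0r addr0.
have cU : c \is a GRing.unit by apply: hR.
set e := d * c^-1.
set z := u + (- e) *: y'.
have Ez : z = b + (- e) *: a.
  rewrite /z Eu Ey' scalerDr scalerA mulNr /e -mulrA mulVr // mulr1.
  by rewrite scaleNr scaleNr addrACA subrr addr0.
have [X0 [XD XZ]] := HX'.
have [Y'0 [Y'D Y'Z]] := sp_subsp HY's.
have [Y0 [YD YZ]] := HYs.
exists (addl Z' z); split.
  apply: sp_add => // Hz; apply: Hu.
  have -> : u = z + e *: y' by rewrite /z -addrA scaleNr addNr addr0.
  by apply: Y'D; [apply: Z'Y | apply: Y'Z].
split.
  apply: addl_sub => //; rewrite Ez; apply: XD => //; exact: XZ.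
apply: addl_sub => //; first by move=> w /Z'Y; apply: Y'Y.
by apply: YD => //; apply: YZ; apply: Y'Y.
Qed.
Lemma sp_mono (R : unitRingType) (n : nat) (hR : division_ring R) d (X : 'rV[R]_n -> Prop) :
  sp d X -> forall e Y, sp e Y -> subs Y X -> (e <= d)%N.
Proof.
elim: d X => [|d IH] X HX e Y HY YX.
  case: e HY => // e [Y' [v [HY' [Hv EY]]]].
  exfalso; apply: Hv.
  have HY's : sp e Y' := HY'.
  have Yv : Y v by apply/EY; apply: addl_v; apply: sp_subsp HY's.
  have := YX v Yv; move/(HX v) => ->.
  by case: (sp_subsp HY's).
case: e HY YX => // e HY YX.
move: HX => [X' [x [HX' [Hx EX]]]].
have HX's : sp d X' := HX'.
have [Z [HZ [ZX' _]]] := @K_lemma R n hR X' x (sp_subsp HX's) e Y HY (fun w Hw => proj1 (EX w) (YX w Hw)).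
exact: IH HX's e Z HZ ZX'.
Qed.

Lemma sp_out (R : unitRingType) (n : nat) (hR : division_ring R) d e (X Y : 'rV[R]_n -> Prop) :
  sp d X -> sp e Y -> (d < e)%N -> exists y, Y y /\ ~ X y.
Proof.
move=> HX HY de; apply: NNPP => H.
have : (e <= d)%N.
  apply: (@sp_mono R n hR d X HX e Y HY) => y Hy; apply: NNPP => Hn; apply: H; by exists y.
by rewrite leqNgt de.
Qed.

Lemma sp_eq (R : unitRingType) (n : nat) (hR : division_ring R) d (X Y : 'rV[R]_n -> Prop) :
  sp d X -> sp d Y -> subs Y X -> subs X Y.
Proof.
move=> HX HY YX v Xv; apply: NNPP => Yv.
have := sp_mono hR HX (sp_add HY Yv) (addl_sub (sp_subsp HX) YX Xv).
by rewrite ltnn.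
Qed.
Definition cap {T : Type} (X Y : T -> Prop) := fun v => X v /\ Y v.
Definition sumv {R : unitRingType} {n : nat} (X Y : 'rV[R]_n -> Prop) :=
  fun w => exists a b, X a /\ Y b /\ w = a + b.
Definition adjs {R : unitRingType} {n : nat} k (X Y : 'rV[R]_n -> Prop) :=
  sp k X /\ sp k Y /\ sp k.-1 (cap X Y).

Lemma set_ext {T : Type} (X Y : T -> Prop) : subs X Y -> subs Y X -> X = Y.
Proof.
move=> XY YX; apply: functional_extensionality => v.
by apply: propositional_extensionality; split; [apply: XY|apply: YX].
Qed.

Lemma adjs_sym (R : unitRingType) (n : nat) k (X Y : 'rV[R]_n -> Prop) :
  adjs k X Y -> adjs k Y X.
Proof.
move=> [HX [HY HS]]; split=> //; split=> //.
by apply: (sp_ext (X' := cap Y X) HS) => v; rewrite /cap; tauto.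
Qed.

Lemma adjs_neq (R : unitRingType) (n : nat) (hR : division_ring R) k (X Y : 'rV[R]_n -> Prop) :
  (0 < k)%N -> adjs k X Y -> X <> Y.
Proof.
move=> k0 [HX [HY HS]] E; subst Y.
have := sp_mono hR HS HX (fun v Hv => conj Hv Hv).
move=> H; clear -k0 H; case: k k0 H => [|k] // _; by rewrite /= ltnn.
Qed.

Lemma adjs_split (R : unitRingType) (n : nat) (hR : division_ring R) k (X Y : 'rV[R]_n -> Prop) :
  (0 < k)%N -> adjs k X Y ->
  exists y, Y y /\ ~ X y /\ forall w, Y w <-> addl (cap X Y) y w.
Proof.
move=> k0 [HX [HY HS]].
have kk : (k.-1 < k)%N by rewrite ltn_predL.
have [y [Yy Sy]] := sp_out hR HS HY kk.
exists y; split=> //; split; first by move=> Xy; apply: Sy.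
have HSy : sp k (addl (cap X Y) y) by rewrite -(prednK k0); apply: sp_add.
have SY : subs (addl (cap X Y) y) Y.
  by apply: addl_sub => //; [apply: sp_subsp HY | move=> v []].
move=> w; split; last by apply: SY.
exact: (sp_eq hR HY HSy SY).
Qed.

Lemma adjs_sum (R : unitRingType) (n : nat) (hR : division_ring R) k (X Y : 'rV[R]_n -> Prop) :
  (0 < k)%N -> adjs k X Y -> sp k.+1 (sumv X Y).
Proof.
move=> k0 H; have [y [Yy [Xy EY]]] := adjs_split hR k0 H.
move: H => [HX [HY HS]].
have [X0 [XD XZ]] := sp_subsp HX.
have [Y0 [YD YZ]] := sp_subsp HY.
apply: (sp_ext (X := addl X y)); first by apply: sp_add.
move=> w; split.
  move=> [x [c [Hx ->]]]; exists x, (c *: y); split=> //; split=> //; exact: YZ.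
move=> [a [b [Ha [Hb ->]]]].
have [s [c [[Xs Ys] ->]]] := proj1 (EY b) Hb.
exists (a + s), c; split; first exact: XD.
by rewrite addrA.
Qed.

Lemma not_sub (R : unitRingType) (n : nat) (hR : division_ring R) k (P Q : 'rV[R]_n -> Prop) :
  sp k P -> sp k Q -> P <> Q -> exists q, Q q /\ ~ P q.
Proof.
move=> HP HQ PQ; apply: NNPP => H; apply: PQ.
have QP : subs Q P by move=> v Qv; apply: NNPP => Pv; apply: H; exists v.
by apply: set_ext => //; apply: (sp_eq hR HP HQ QP).
Qed.

Lemma unit_div (R : unitRingType) (n : nat) (hR : division_ring R) (P : 'rV[R]_n -> Prop) u s c q :
  subsp P -> P u -> P s -> u = s + c *: q -> c != 0 -> P q.
Proof.
move=> [P0 [PD PZ]] Pu Ps E c0.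
have cU : c \is a GRing.unit by apply: hR.
have -> : q = c^-1 *: (u + (-1) *: s).
  by rewrite E scaleN1r addrC addKr scalerA mulVr // scale1r.
exact: (PZ _ _ (PD _ _ Pu (PZ _ _ Ps))).
Qed.

Lemma star_adj (R : unitRingType) (n : nat) (hR : division_ring R) k (S P Q : 'rV[R]_n -> Prop) :
  (0 < k)%N -> sp k.-1 S -> sp k P -> sp k Q -> subs S P -> subs S Q -> P <> Q -> adjs k P Q.
Proof.
move=> k0 HS HP HQ SP SQ PQ; split=> //; split=> //.
have [q [Qq Pq]] := not_sub hR HP HQ PQ.
have Sq : ~ S q by move=> /SP.
have HSq : sp k (addl S q) by rewrite -(prednK k0); apply: sp_add.
have SQq : subs (addl S q) Q by apply: addl_sub => //; apply: sp_subsp HQ.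
have QS := sp_eq hR HQ HSq SQq.
apply: (sp_ext HS) => v; split; first by move=> Sv; split; [apply: SP|apply: SQ].
move=> [Pv Qv]; have [s [c [Ss E]]] := QS v Qv.
case: (eqVneq c 0) => [c0'|c0']; first by rewrite E c0' scale0r addr0.
exfalso; apply: Pq; apply: (unit_div hR (sp_subsp HP) Pv (SP s Ss) E c0').
Qed.

Lemma top_adj (R : unitRingType) (n : nat) (hR : division_ring R) k (T P Q : 'rV[R]_n -> Prop) :
  (0 < k)%N -> sp k.+1 T -> sp k P -> sp k Q -> subs P T -> subs Q T -> P <> Q -> adjs k P Q.
Proof.
move=> k0 HT HP HQ PT QT PQ; split=> //; split=> //.
have [q [Qq Pq]] := not_sub hR HP HQ PQ.
have HPq : sp k.+1 (addl P q) by apply: sp_add.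
have PqT : subs (addl P q) T by apply: addl_sub => //; [apply: sp_subsp HT|apply: QT].
have TP := sp_eq hR HT HPq PqT.
have HQ' : sp k.-1.+1 Q by rewrite prednK.
have [Z [HZ [ZP ZQ]]] := @K_lemma R n hR P q (sp_subsp HP) k.-1 Q HQ' (fun w Hw => TP w (QT w Hw)).
apply: (sp_ext HZ) => v; split; first by move=> Zv; split; [apply: ZP|apply: ZQ].
move=> [Pv Qv]; apply: NNPP => Zv.
have HZv : sp k (addl Z v) by rewrite -(prednK k0); apply: sp_add.
have ZvP : subs (addl Z v) P by apply: addl_sub => //; apply: sp_subsp HP.
have ZvQ : subs (addl Z v) Q by apply: addl_sub => //; apply: sp_subsp HQ.
have PZv := sp_eq hR HP HZv ZvP.
apply: PQ; apply: set_ext; first by move=> w /PZv /ZvQ.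
apply: (sp_eq hR HQ HP) => w /PZv /ZvQ //.
Qed.

Lemma triple (R : unitRingType) (n : nat) (hR : division_ring R) k (X Y Z : 'rV[R]_n -> Prop) :
  (0 < k)%N -> adjs k X Y -> adjs k X Z -> adjs k Y Z -> ~ subs (cap X Y) Z -> subs Z (sumv X Y).
Proof.
move=> k0 [HX [HY HXY]] [_ [HZ HXZ]] [_ [_ HYZ]] NS.
have N1 : ~ subs (cap Y Z) (cap X Z).
  move=> H; apply: NS.
  have H1 : subs (cap Y Z) (cap X Y) by move=> v [Yv Zv]; have [] := H v (conj Yv Zv).
  by move=> v /(sp_eq hR HXY HYZ H1) [].
have [v [[Yv Zv] Nv]] : exists v, cap Y Z v /\ ~ cap X Z v.
  apply: NNPP => H; apply: N1 => v Hv; apply: NNPP => Hn; apply: H; by exists v.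
have Xv : ~ X v by move=> Xv; apply: Nv.
have HZv : sp k (addl (cap X Z) v) by rewrite -(prednK k0); apply: sp_add.
have ZvZ : subs (addl (cap X Z) v) Z by apply: addl_sub => //; [apply: sp_subsp HZ|move=> w []].
have [Y0 [YD YZ]] := sp_subsp HY.
move=> w /(sp_eq hR HZ HZv ZvZ) [s [c [[Xs _] ->]]].
by exists s, (c *: v); split=> //; split=> //; apply: YZ.
Qed.

Lemma mixed (R : unitRingType) (n : nat) (hR : division_ring R) k (X Y Z1 Z2 : 'rV[R]_n -> Prop) :
  (0 < k)%N -> adjs k X Y -> subs (cap X Y) Z1 -> ~ subs Z1 (sumv X Y) ->
  subs Z2 (sumv X Y) -> ~ subs (cap X Y) Z2 ->
  adjs k X Z1 -> adjs k X Z2 -> adjs k Z1 Z2 -> False.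
Proof.
move=> k0 AXY SZ1 NZ1 Z2T NZ2 AX1 AX2 A12.
have N1 : ~ subs (cap X Z1) Z2.
  by move=> H; apply: NZ2 => v [Xv Yv]; apply: H; split=> //; apply: SZ1.
have Z2S := triple hR k0 AX1 AX2 A12 N1.
have HT := adjs_sum hR k0 AXY.
have HT1 := adjs_sum hR k0 AX1.
have HX : sp k X by case: AXY.
have Z2X : subs Z2 X.
  move=> w Z2w; apply: NNPP => Xw.
  have HXw : sp k.+1 (addl X w) by apply: sp_add.
  have XwT1 : subs (addl X w) (sumv X Z1).
    apply: addl_sub; [exact: sp_subsp HT1| |exact: Z2S].
    by move=> v Xv; exists v, 0; split=> //; split; [case: (sp_subsp (proj1 (proj2 AX1)))|rewrite addr0].
  have XwT : subs (addl X w) (sumv X Y).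
    apply: addl_sub; [exact: sp_subsp HT| |exact: Z2T].
    by move=> v Xv; exists v, 0; split=> //; split; [case: (sp_subsp (proj1 (proj2 AXY)))|rewrite addr0].
  apply: NZ1 => v Z1v.
  apply: XwT; apply: (sp_eq hR HT1 HXw XwT1).
  by exists 0, v; split; [case: (sp_subsp HX)|split=> //; rewrite add0r].
have HZ2 : sp k Z2 by case: AX2 => _ [].
have XZ2 := sp_eq hR HX HZ2 Z2X.
by apply: NZ2 => v [Xv _]; apply: XZ2.
Qed.
Lemma sub_sumvl (R : unitRingType) (n : nat) (X Y : 'rV[R]_n -> Prop) :
  subsp Y -> subs X (sumv X Y).
Proof. by move=> [Y0 _] v Xv; exists v, 0; rewrite addr0. Qed.

Lemma sub_sumvr (R : unitRingType) (n : nat) (X Y : 'rV[R]_n -> Prop) :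
  subsp X -> subs Y (sumv X Y).
Proof. by move=> [X0 _] v Yv; exists 0, v; rewrite add0r. Qed.

Lemma cover_lem (R : unitRingType) (n : nat) (hR : division_ring R) k (X Y W E : 'rV[R]_n -> Prop) :
  (0 < k)%N -> adjs k X Y -> adjs k X W -> adjs k Y W -> adjs k E X -> adjs k E Y ->
  W <> E -> ~ adjs k E W ->
  exists M0 : ('rV[R]_n -> Prop) -> Prop,
   (forall Z, M0 Z -> sp k Z) /\
   (forall Z1 Z2, M0 Z1 -> M0 Z2 -> Z1 <> Z2 -> adjs k Z1 Z2) /\
   M0 X /\ M0 Y /\ M0 W /\
   (forall D : ('rV[R]_n -> Prop) -> Prop,
      (forall Z, D Z -> sp k Z) ->
      (forall Z1 Z2, D Z1 -> D Z2 -> Z1 <> Z2 -> adjs k Z1 Z2) ->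
      D X -> D Y -> D W -> forall Z, D Z -> M0 Z).
Proof.
move=> k0 AXY AXW AYW AEX AEY WE NEW.
have [HX [HY HS]] := AXY.
have HW : sp k W by case: AXW => _ [].
have HE : sp k E by case: AEX.
have HT := adjs_sum hR k0 AXY.
have sX := sp_subsp HX; have sY := sp_subsp HY.
have XT : subs X (sumv X Y) by apply: sub_sumvl.
have YT : subs Y (sumv X Y) by apply: sub_sumvr.
have SX : subs (cap X Y) X by move=> v [].
have SY : subs (cap X Y) Y by move=> v [].
case: (classic (subs (cap X Y) W)) => SW.
  have NWT : ~ subs W (sumv X Y).
    move=> WT; apply: NEW.
    case: (classic (subs (cap X Y) E)) => SE.
      exact: (@star_adj R n hR k (cap X Y) E W k0 HS HE HW SE SW (fun H => WE (esym H))).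
    have ET := triple hR k0 AXY (adjs_sym AEX) (adjs_sym AEY) SE.
    exact: (@top_adj R n hR k (sumv X Y) E W k0 HT HE HW ET WT (fun H => WE (esym H))).
  exists (fun Z => sp k Z /\ subs (cap X Y) Z); split; first by move=> Z [].
  split; first by move=> Z1 Z2 [H1 S1] [H2 S2]; exact: (@star_adj R n hR k (cap X Y) Z1 Z2 k0 HS H1 H2 S1 S2).
  split=> //; split=> //; split=> //.
  move=> D DV DC DX DY DW Z DZ; split; first exact: DV.
  apply: NNPP => NSZ.
  have ZX : Z <> X by move=> E'; apply: NSZ; rewrite E'.
  have ZY : Z <> Y by move=> E'; apply: NSZ; rewrite E'.
  have ZW : Z <> W by move=> E'; apply: NSZ; rewrite E'.
  have AXZ := DC X Z DX DZ (fun e => ZX (esym e)).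
  have AYZ := DC Y Z DY DZ (fun e => ZY (esym e)).
  have AWZ := DC W Z DW DZ (fun e => ZW (esym e)).
  have ZT := triple hR k0 AXY AXZ AYZ NSZ.
  exact: (mixed hR k0 AXY SW NWT ZT NSZ AXW AXZ AWZ).
have WT := triple hR k0 AXY AXW AYW SW.
exists (fun Z => sp k Z /\ subs Z (sumv X Y)); split; first by move=> Z [].
split; first by move=> Z1 Z2 [H1 S1] [H2 S2]; exact: (@top_adj R n hR k (sumv X Y) Z1 Z2 k0 HT H1 H2 S1 S2).
split=> //; split=> //; split=> //.
move=> D DV DC DX DY DW Z DZ; split; first exact: DV.
apply: NNPP => NZT.
have ZX : Z <> X by move=> E'; apply: NZT; rewrite E'.
have ZY : Z <> Y by move=> E'; apply: NZT; rewrite E'.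
have ZW : Z <> W by move=> E'; apply: NZT; rewrite E'.
have AXZ := DC X Z DX DZ (fun e => ZX (esym e)).
have AYZ := DC Y Z DY DZ (fun e => ZY (esym e)).
have AZW := DC Z W DZ DW ZW.
have SZ : subs (cap X Y) Z.
  apply: NNPP => NSZ; apply: NZT; exact: (triple hR k0 AXY AXZ AYZ NSZ).
exact: (mixed hR k0 AXY SZ NZT WT SW AXZ AXW AZW).
Qed.
Definition ext {R : Type} {d : nat} (c : 'I_d -> R) (c0 : R) (i : 'I_d.+1) : R :=
  if unlift ord0 i is Some j then c j else c0.

Lemma ext0 (R : Type) d (c : 'I_d -> R) c0 : ext c c0 ord0 = c0.
Proof. by rewrite /ext unlift_none. Qed.

Lemma extS (R : Type) d (c : 'I_d -> R) c0 j : ext c c0 (lift ord0 j) = c j.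
Proof. by rewrite /ext liftK. Qed.

Lemma sum_ext (R : unitRingType) (n d : nat) (c : 'I_d -> R) c0 (F : 'I_d.+1 -> 'rV[R]_n) :
  \sum_(i < d.+1) ext c c0 i *: F i = c0 *: F ord0 + \sum_(j < d) c j *: F (lift ord0 j).
Proof.
rewrite big_ord_recl ext0; congr (_ + _); apply: eq_bigr => j _; by rewrite extS.
Qed.

Lemma isd_sp (R : unitRingType) (n : nat) d (X : 'rV[R]_n -> Prop) :
  is_subspace_dim d X -> sp d X.
Proof.
elim: d X => [|d IH] X [b [Hb HX]] /=.
  move=> v; rewrite HX; split; first by move=> [c ->]; rewrite big_ord0.
  by move=> ->; exists (fun _ => 0); rewrite big_ord0.
pose Y := fun v => exists c : 'I_d -> R, v = \sum_(j < d) c j *: b (lift ord0 j).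
exists Y, (b ord0); split.
  apply: IH; exists (fun j => b (lift ord0 j)); split=> // c Hc j.
  have := Hb (ext c 0); rewrite sum_ext scale0r add0r => /(_ Hc) /(_ (lift ord0 j)).
  by rewrite extS.
split.
  move=> [c Hc]; have := Hb (ext c (-1)); rewrite sum_ext -Hc scaleN1r addNr.
  move=> /(_ erefl ord0); rewrite ext0 => /eqP; rewrite oppr_eq0 oner_eq0.
  done.
move=> w; rewrite HX; split.
  move=> [c ->]; exists (\sum_(j < d) c (lift ord0 j) *: b (lift ord0 j)), (c ord0).
  split; first by exists (fun j => c (lift ord0 j)).
  by rewrite big_ord_recl addrC.
move=> [y [c0 [[c ->] ->]]]; exists (ext c c0).
by rewrite sum_ext addrC.
Qed.

Lemma sp_isd (R : unitRingType) (n : nat) (hR : division_ring R) d (X : 'rV[R]_n -> Prop) :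
  sp d X -> is_subspace_dim d X.
Proof.
elim: d X => [|d IH] X /=.
  move=> HX; exists (fun _ => 0); split; first by move=> c _ [].
  move=> v; rewrite HX; split; first by move=> ->; exists (fun _ => 0); rewrite big_ord0.
  by move=> [c ->]; rewrite big_ord0.
move=> [Y [v [HY [Hv HX]]]].
have HYs : sp d Y := HY.
have [b [Hb EY]] := IH Y HYs.
have sY := sp_subsp HYs.
exists (ext b v); split.
  move=> c; rewrite (_ : c = ext (fun j => c (lift ord0 j)) (c ord0)); last first.
    by apply: functional_extensionality => i; case: (unliftP ord0 i) => [j ->|->]; rewrite ?extS ?ext0.
  rewrite sum_ext ext0.
  under eq_bigr do rewrite extS.
  move=> H.
  have c0 : c ord0 = 0.
    apply/eqP; apply: contraT => c0.
    exfalso; apply: Hv.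
    apply: (unit_div hR sY (u := 0) (s := \sum_(j < d) c (lift ord0 j) *: b j) (c := c ord0)).
    - by case: sY.
    - by apply/EY; exists (fun j => c (lift ord0 j)).
    - by rewrite addrC H.
    - done.
  rewrite c0 scale0r add0r in H.
  move=> i; case: (unliftP ord0 i) => [j ->|->]; rewrite ?extS ?ext0 //.
  exact: Hb H j.
move=> w; rewrite HX; split.
  move=> [y [c0 [/EY [c ->] ->]]]; exists (ext c c0).
  by rewrite sum_ext ext0 addrC; under [in RHS]eq_bigr do rewrite extS.
move=> [c ->]; exists (\sum_(j < d) c (lift ord0 j) *: b j), (c ord0); split.
  by apply/EY; exists (fun j => c (lift ord0 j)).
rewrite big_ord_recl addrC ext0; congr (_ + _); apply: eq_bigr => j _; by rewrite extS.
Qed.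

Lemma exists_out l (A : {set 'I_l}) : (#|A| < l)%N -> exists x, x \notin A.
Proof.
move=> H; have := cardsC A; rewrite card_ord => E.
have /card_gt0P [x Hx] : (0 < #|~: A|)%N by lia.
by exists x; rewrite inE in Hx.
Qed.

Lemma exists_in l (A : {set 'I_l}) : (0 < #|A|)%N -> exists x, x \in A.
Proof. by move/card_gt0P. Qed.

Lemma J0 l j : (j <= l)%N -> exists A : {set 'I_l}, #|A| = j.
Proof.
elim: j => [|j IH] H; first by exists set0; rewrite cards0.
have [A HA] := IH (ltnW H).
have [x Hx] := exists_out (A := A) (ltac:(lia)).
by exists (x |: A); rewrite cardsU1 Hx HA.
Qed.

Lemma jadj_sym l m (A B : {set 'I_l}) : johnson_adj m A B -> johnson_adj m B A.
Proof. by move=> [HA [HB H]]; split=> //; split=> //; rewrite setIC. Qed.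

Lemma jadj_neq l m (A B : {set 'I_l}) : (0 < m)%N -> johnson_adj m A B -> A <> B.
Proof. by move=> m0 [HA [HB H]] E; subst; rewrite setIid HA in H; lia. Qed.

Lemma J1 l m (A : {set 'I_l}) : (0 < m)%N -> (m < l)%N -> #|A| = m ->
  exists B, johnson_adj m A B.
Proof.
move=> m0 ml HA.
have [s Hs] := exists_in (A := A) (ltac:(lia)).
have [x Hx] := exists_out (A := A) (ltac:(lia)).
have HD := cardsD1 s A; rewrite Hs HA in HD.
have HxD : x \notin A :\ s by rewrite inE negb_and Hx orbT.
exists (x |: (A :\ s)); split=> //; split.
  by rewrite /johnson_vertex cardsU1 HxD; lia.
have -> : A :&: (x |: (A :\ s)) = A :\ s.
  apply/setP => y; rewrite !inE; case Ey: (y == x).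
    by move/eqP: Ey => ->; rewrite (negbTE Hx) andbF.
  by case: (y \in A); case: (y == s).
lia.
Qed.

Lemma J2 l m (A B : {set 'I_l}) : (0 < m)%N -> (m.+2 <= l)%N -> johnson_adj m A B ->
  exists D, johnson_adj m D A /\ johnson_adj m D B.
Proof.
move=> m0 ml [HA [HB HI]].
have HU := cardsUI A B; rewrite HA HB HI in HU.
have [c Hc] := exists_out (A := A :|: B) (ltac:(lia)).
have cI : c \notin A :&: B by move: Hc; rewrite !inE; case: (c \in A).
have HD : #|c |: (A :&: B)| = m by rewrite cardsU1 cI HI; lia.
exists (c |: (A :&: B)); split; split=> //; split=> //.
  have -> : (c |: A :&: B) :&: A = A :&: B.
    apply/setP => y; rewrite !inE; case: (eqVneq y c) => [->|] /=.
      by move: Hc; rewrite !inE; case: (c \in A).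
    by case: (y \in A); case: (y \in B).
  done.
have -> : (c |: A :&: B) :&: B = A :&: B.
  apply/setP => y; rewrite !inE; case: (eqVneq y c) => [->|] /=.
    by move: Hc; rewrite !inE; case: (c \in A); case: (c \in B).
  by case: (y \in A); case: (y \in B).
done.
Qed.

Lemma J3 l m (A B D : {set 'I_l}) : (1 < m)%N -> (m.+2 <= l)%N ->
  johnson_adj m A B -> johnson_adj m A D -> johnson_adj m B D ->
  exists E, johnson_adj m E A /\ johnson_adj m E B /\ (#|E :&: D| < m.-1)%N.
Proof.
move=> m1 ml [HA [HB HI]] [_ [HD HAD]] [_ [_ HBD]].
have HU := cardsUI A B; rewrite HA HB HI in HU.
case: (boolP (A :&: B \subset D)) => ID.
  have DA : D :&: A = A :&: B.
    apply/esym/eqP; rewrite eqEcard subsetI ID subsetIl /= (setIC D A) HAD HI //.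
  have DB : D :&: B = A :&: B.
    apply/esym/eqP; rewrite eqEcard subsetI ID subsetIr /= (setIC D B) HBD HI //.
  have [s Hs] := exists_in (A := A :&: B) (ltac:(lia)).
  have sA : s \in A by move: Hs; rewrite inE => /andP [].
  have sB : s \in B by move: Hs; rewrite inE => /andP [].
  have sU : s \in A :|: B by rewrite inE sA.
  have c1 := cardsD1 s (A :|: B); rewrite sU in c1.
  have c2 := cardsD1 s A; rewrite sA HA in c2.
  have c3 := cardsD1 s B; rewrite sB HB in c3.
  have c4 := cardsD1 s (A :&: B); rewrite Hs HI in c4.
  exists ((A :|: B) :\ s); split; [|split].
  - split; first by rewrite /johnson_vertex; lia.
    split=> //.
    have -> : ((A :|: B) :\ s) :&: A = A :\ s.
      by apply/setP => y; rewrite !inE; case: (y \in A); case: (y \in B); case: (y == s).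
    lia.
  - split; first by rewrite /johnson_vertex; lia.
    split=> //.
    have -> : ((A :|: B) :\ s) :&: B = B :\ s.
      by apply/setP => y; rewrite !inE; case: (y \in A); case: (y \in B); case: (y == s).
    lia.
  - have -> : ((A :|: B) :\ s) :&: D = ((A :|: B) :&: D) :\ s.
      by apply/setP => y; rewrite !inE; case: (y \in A); case: (y \in B); case: (y == s); case: (y \in D).
    rewrite setIUl (setIC A) (setIC B) DA DB setUid; lia.
have [x Hx] := exists_out (A := A :|: B) (ltac:(lia)).
have xA : x \notin A by move: Hx; rewrite inE negb_or => /andP [].
have xB : x \notin B by move: Hx; rewrite inE negb_or => /andP [].
have xI : x \notin A :&: B by rewrite inE (negbTE xA).
have HP := cardsUI (D :&: A) (D :&: B).
have HDA : #|D :&: A| = m.-1 by rewrite setIC.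
have HDB : #|D :&: B| = m.-1 by rewrite setIC.
rewrite HDA HDB in HP.
have PI : (D :&: A) :&: (D :&: B) \proper A :&: B.
  rewrite properE; apply/andP; split.
    by apply/subsetP => y; rewrite !inE => /andP [/andP [_ ->] /andP [_ ->]].
  apply/negP => /subsetP H; move/negP: ID; apply; apply/subsetP => y /H.
  by rewrite !inE => /andP [/andP [->]].
have HPI := proper_card PI; rewrite HI in HPI.
have xD : x \notin D.
  apply/negP => xD.
  have PD : (D :&: A) :|: (D :&: B) == D.
    by rewrite eqEcard HD; apply/andP; split; [apply/subsetP => y; rewrite !inE => /orP [] /andP [] | lia].
  move/eqP: PD => PD; move: xD; rewrite -PD !inE (negbTE xA) (negbTE xB).
  by rewrite !andbF.
have cE : #|x |: (A :&: B)| = m by rewrite cardsU1 xI HI; lia.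
exists (x |: (A :&: B)); split; [|split].
- split=> //; split=> //.
  have -> : (x |: A :&: B) :&: A = A :&: B.
    apply/setP => y; rewrite !inE; case Ey: (y == x); last by case: (y \in A); case: (y \in B).
    by move/eqP: Ey => ->; rewrite (negbTE xA).
  done.
- split=> //; split=> //.
  have -> : (x |: A :&: B) :&: B = A :&: B.
    apply/setP => y; rewrite !inE; case Ey: (y == x); last by case: (y \in A); case: (y \in B).
    by move/eqP: Ey => ->; rewrite (negbTE xB) !andbF.
  done.
- have -> : (x |: A :&: B) :&: D = (A :&: B) :&: D.
    apply/setP => y; rewrite !inE; case Ey: (y == x) => //=.
    by move/eqP: Ey => ->; rewrite (negbTE xD) (negbTE xA).
  rewrite -HI; apply: proper_card; rewrite properE subsetIl /=.
  apply/negP => /subsetP H; move/negP: ID; apply; apply/subsetP => y /H.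
  by rewrite inE => /andP [].
Qed.

Lemma gv_sp {R : unitRingType} {n k : nat} (hR : division_ring R) {X : 'rV[R]_n -> Prop} :
  grass_vertex k X <-> sp k X.
Proof. by split; [apply: isd_sp | apply: sp_isd]. Qed.

Lemma ga_adjs {R : unitRingType} {n k : nat} (hR : division_ring R) {X Y : 'rV[R]_n -> Prop} :
  grass_adj k X Y <-> adjs k X Y.
Proof.
rewrite /grass_adj /adjs !(gv_sp hR); split; move=> [HX [HY HS]]; split=> //; split=> //.
  exact: isd_sp.
exact: sp_isd.
Qed.

Lemma gdist1 (T : Type) (adj : T -> T -> Prop) x y : gdist adj x y 1 <-> adj x y /\ x <> y.
Proof.
split.
  move=> [[z [Hz Ez]] H]; simpl in Ez; subst z; split=> // E; have := H 0%N; rewrite E /=; by move=> /(_ erefl).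
move=> [H ne]; split; first by exists y.
by case=> [|d] //= E.
Qed.

Theorem lemma1 (R : unitRingType) (n k l m : nat)
  (hR : division_ring R)
  (hn : (4 <= n)%N) (hl : (4 <= l)%N)
  (hk1 : (1 < k)%N) (hk2 : (k < n - 1)%N)
  (hm1 : (1 < m)%N) (hm2 : (m < l - 1)%N)
  (hmin : (minn m (l - m) <= minn k (n - k))%N)
  (f : {set 'I_l} -> ('rV[R]_n -> Prop))
  (hf : isometric_embedding k m f) :
  let J := fun X : 'rV[R]_n -> Prop => exists A, johnson_vertex m A /\ f A = X in
  forall C : ('rV[R]_n -> Prop) -> Prop,
    is_maximal_clique J (@grass_adj R n k) C ->
    exists M : ('rV[R]_n -> Prop) -> Prop,
      is_maximal_clique (@grass_vertex R n k) (@grass_adj R n k) M /\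
      (forall X, C X -> M X) /\
      forall M' : ('rV[R]_n -> Prop) -> Prop,
        is_maximal_clique (@grass_vertex R n k) (@grass_adj R n k) M' ->
        (forall X, C X -> M' X) -> forall X, M' X <-> M X.
Proof.
move=> J C [[CJ Ccl] Cmax].
have k0 : (0 < k)%N by lia.
have m0 : (0 < m)%N by lia.
have ml : (m.+2 <= l)%N by lia.
have [fV [finj fiso]] := hf.
have j2g : forall A B, johnson_adj m A B -> grass_adj k (f A) (f B).
  move=> A B H; have [HA [HB _]] := H.
  have := proj1 (fiso A B 1%N HA HB); rewrite !gdist1 => /(_ (conj H (jadj_neq m0 H))).
  by case.
have g2j : forall A B, johnson_vertex m A -> johnson_vertex m B ->
    grass_adj k (f A) (f B) -> johnson_adj m A B.
  move=> A B HA HB H.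
  have ne : f A <> f B := adjs_neq hR k0 (proj1 (ga_adjs hR) H).
  have := proj2 (fiso A B 1%N HA HB); rewrite !gdist1 => /(_ (conj H ne)).
  by case.
have gsym : forall X Y : 'rV[R]_n -> Prop, grass_adj k X Y -> grass_adj k Y X.
  move=> X Y H; exact: (proj2 (ga_adjs hR) (adjs_sym (proj1 (ga_adjs hR) H))).
have add_max : forall Z0, J Z0 -> (forall Z, C Z -> Z <> Z0 -> grass_adj k Z Z0) -> C Z0.
  move=> Z0 JZ0 HZ0.
  apply: (Cmax (fun Z => C Z \/ Z = Z0)); last by right.
  - split; first by move=> x [/CJ|->].
    move=> x y [Cx|->] [Cy|->] ne //.
    + exact: Ccl.
    + exact: HZ0.
    + by apply: gsym; apply: HZ0 => // e; apply: ne.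
  - by move=> x Cx; left.
have jv : forall A B : {set 'I_l}, johnson_adj m A B -> johnson_vertex m A /\ johnson_vertex m B.
  by move=> A B [HA [HB _]].
have [X0 CX0] : exists X, C X.
  apply: NNPP => NC.
  have [A0 HA0] : exists A0 : {set 'I_l}, #|A0| = m by apply: J0; lia.
  have : C (f A0) by apply: add_max; [by exists A0 | move=> Z CZ; exfalso; apply: NC; exists Z].
  by move=> CA; apply: NC; exists (f A0).
have [A [HA EA]] := CJ X0 CX0; subst X0.
have [Y [CY YA]] : exists Y, C Y /\ Y <> f A.
  apply: NNPP => NC.
  have onlyA : forall Z, C Z -> Z = f A.
    by move=> Z CZ; apply: NNPP => ne; apply: NC; exists Z.
  have [B HAB] := J1 m0 (ltnW ml) HA.
  have CB : C (f B).
    apply: add_max; first by exists B; case: (jv _ _ HAB).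
    by move=> Z /onlyA -> _; apply: j2g.
  have := onlyA _ CB => /(finj _ _ (proj1 (proj2 HAB)) HA) E.
  exact: (jadj_neq m0 HAB (esym E)).
have [B [HB EB]] := CJ Y CY; subst Y.
have AB : johnson_adj m A B by apply: g2j => //; apply: Ccl => // e; apply: YA.
have [W [CW [WA WB]]] : exists W, C W /\ W <> f A /\ W <> f B.
  apply: NNPP => NC.
  have onlyAB : forall Z, C Z -> Z = f A \/ Z = f B.
    move=> Z CZ; apply: NNPP => H; apply: NC; exists Z; split=> //; split.
      by move=> e; apply: H; left.
    by move=> e; apply: H; right.
  have [D0 [D0A D0B]] := J2 m0 ml AB.
  have HD0 : johnson_vertex m D0 by case: D0A.
  have CD0 : C (f D0).
    apply: add_max; first by exists D0.
    move=> Z /onlyAB [->|->] _; apply: j2g; exact: jadj_sym.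
  case: (onlyAB _ CD0) => E.
    exact: (jadj_neq m0 D0A (finj _ _ HD0 HA E)).
  exact: (jadj_neq m0 D0B (finj _ _ HD0 HB E)).
have [D [HD ED]] := CJ W CW; subst W.
have AD : johnson_adj m A D by apply: g2j => //; apply: Ccl => // e; apply: WA.
have BD : johnson_adj m B D by apply: g2j => //; apply: Ccl => // e; apply: WB.
have [E [EA [EB ED]]] := J3 hm1 ml AB AD BD.
have HE : johnson_vertex m E by case: EA.
have fEA := j2g _ _ EA.
have fEB := j2g _ _ EB.
have fED : f D <> f E.
  move=> e; have := finj _ _ HD HE e => e'; subst E.
  by move: ED; rewrite setIid HD; lia.
have nED : ~ grass_adj k (f E) (f D).
  move=> H; have [_ [_ H']] := g2j _ _ HE HD H; rewrite H' in ED; lia.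
have toA : forall X Y : 'rV[R]_n -> Prop, grass_adj k X Y -> adjs k X Y := fun X Y H => proj1 (ga_adjs hR) H.
have [M0 [M0V [M0C [MX [MY [MW Mmax]]]]]] :=
  cover_lem hR k0 (toA _ _ (j2g _ _ AB)) (toA _ _ (j2g _ _ AD)) (toA _ _ (j2g _ _ BD))
    (toA _ _ fEA) (toA _ _ fEB) fED (fun H => nED (proj2 (ga_adjs hR) H)).
have M0cl : is_clique (@grass_vertex R n k) (@grass_adj R n k) M0.
  split; first by move=> Z /M0V /(gv_sp hR).
  by move=> Z1 Z2 H1 H2 ne; apply: (proj2 (ga_adjs hR)); apply: M0C.
have useD : forall D' : ('rV[R]_n -> Prop) -> Prop,
    (forall Z, D' Z -> grass_vertex k Z) ->
    (forall Z1 Z2, D' Z1 -> D' Z2 -> Z1 <> Z2 -> grass_adj k Z1 Z2) ->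
    D' (f A) -> D' (f B) -> D' (f D) -> forall Z, D' Z -> M0 Z.
  move=> D' DV DC; apply: Mmax.
    by move=> Z /DV /(gv_sp hR).
  by move=> Z1 Z2 H1 H2 ne; apply: (proj1 (ga_adjs hR)); apply: DC.
have CM : forall X, C X -> M0 X.
  apply: useD => //.
  by move=> Z /CJ [A' [HA' <-]]; apply: fV.
exists M0; split.
  split=> //.
  move=> D' [DV DC] MD; apply: useD => //; by apply: MD.
split=> //.
move=> M' [[M'V M'C] M'max] CM' X; split.
  by apply: useD => //; apply: CM'.
move=> HX; apply: (M'max M0 M0cl _ X HX) => Z HZ; apply: (useD M') => //; by apply: CM'.
Qed.
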